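(* Let $P$ be a finite poset and $f\colon\mathcal{J}(P)\to\mathbb{R}$ a real-valued statistic such that $f\equiv^q c(q)$ for some $c(q)\in\mathbb{R}(q)$. Then for any positive integers $r,s$ and any cyclic permutation $\theta$ of $\mathbf{F}_0\cup\mathbf{F}_1$, the statistic $f\colon\mathcal{J}_{r,s}(P)\to\mathbb{R}$ is $c(r/s)$-mesic under the $q$-rowmotion operator $\rho\colon\mathcal{J}_{r,s}(P)\to\mathcal{J}_{r,s}(P)$.
   Context: $\mathcal{J}(P)$ is the set of order ideals of $P$. For $p\in P$, $I\in\mathcal{J}(P)$: $T_p^+(I)=1$ if $p$ is minimal in $P\setminus I$, else $0$; $T_p^-(I)=1$ if $p$ is maximal in $I$, else $0$; $T_p^q=T_p^+-qT_p^-$ with $q$ an indeterminate. For $f,g\colon\mathcal{J}(P)\to\mathbb{R}(q)$, $f\equiv^q g$ means $f-g=\sum_{p\in P}c_p(q)T_p^q$ for some $c_p(q)\in\mathbb{R}(q)$; an element of $\mathbb{R}(q)$ denotes the corresponding constant function. $\mathbf{F}_0,\mathbf{F}_1$ are disjoint sets of sizes $s$ and $r$; $\theta$ is a single $(r+s)$-cycle on $\mathbf{F}_0\cup\mathbf{F}_1$. $\mathcal{J}_{r,s}(P)$ is the set of labelings $L\colon P\to\mathbf{F}_0\cup\mathbf{F}_1$ with $L^{-1}(\mathbf{F}_0)$ an order ideal. $x$ is active in $L$ if it is maximal in $L^{-1}(\mathbf{F}_0)$ or minimal in $L^{-1}(\mathbf{F}_1)$; the toggle $\tau_p$ replaces $L(p)$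 by $\theta(L(p))$ if $p$ is active and otherwise does nothing; $\rho=\tau_{p_1}\circ\cdots\circ\tau_{p_n}$ for a linear extension $p_1,\dots,p_n$ of $P$. A statistic $g$ on $\mathcal{J}(P)$ is viewed on $\mathcal{J}_{r,s}(P)$ via $g(L)=g(L^{-1}(\mathbf{F}_0))$. A statistic is $c$-mesic if its average over every orbit equals $c$. *)

(* Defs.v *)
From HB Require Import structures.
From mathcomp Require Import all_boot all_order all_algebra all_fingroup.
From mathcomp Require Import fraction.
From mathcomp Require Import reals.
Set Implicit Arguments. Unset Strict Implicit. Unset Printing Implicit Defensive.
Import Order.TTheory GRing.Theory Num.Theory.
Local Open Scope ring_scope.

Notation "x %:F" := (@FracField.tofrac _ x) : ring_scope.

Section Defs.
Variables (d : Order.disp_t) (P : finPOrderType d).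

Definition order_ideal (I : {set P}) : bool :=
  [forall x, forall y, ((x \in I) && (y <= x)%O) ==> (y \in I)].

Definition Tplus (p : P) (I : {set P}) : bool :=
  (p \in ~: I) && [forall y, (y \in ~: I) ==> ~~ (y < p)%O].
Definition Tminus (p : P) (I : {set P}) : bool :=
  (p \in I) && [forall y, (y \in I) ==> ~~ (p < y)%O].

Variable R : realType.
Notation RQ := {fraction {poly R}}.

Definition Tq (p : P) (I : {set P}) : RQ :=
  (Tplus p I : nat)%:R - (('X : {poly R})%:F) * (Tminus p I : nat)%:R.

Definition qequiv (g : {set P} -> RQ) (c : RQ) : Prop :=
  exists cp : P -> RQ,
    forall I, order_ideal I -> g I - c = \sum_(p : P) cp p * Tq p I.

Definition linear_extension (ext : seq P) : Prop :=
  [/\ uniq ext, forall x, x \in ext &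
      forall x y, (x < y)%O -> (index x ext < index y ext)%N].
End Defs.

Definition frac_eval (R : realType) (c : {fraction {poly R}}) (x v : R) : Prop :=
  exists n den : {poly R},
    [/\ den.[x] != 0, c = n%:F / den%:F & v = n.[x] / den.[x]].

(* labels: F_0 = 'I_s (left summand), F_1 = 'I_r (right summand) *)
Definition Lab (s r : nat) : finType := ('I_s + 'I_r)%type.
Definition inF0 (s r : nat) (l : Lab s r) : bool :=
  if l is inl _ then true else false.

Definition full_cycle (T : finType) (theta : {perm T}) : Prop :=
  forall x, porbit theta x = [set: T].

Section Labelings.
Variables (d : Order.disp_t) (P : finPOrderType d) (s r : nat).
Variable theta : {perm Lab s r}.
Notation labeling := {ffun P -> Lab s r}.

Definition zeroset (L : labeling) : {set P} := [set p | inF0 (L p)].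

Definition rs_labeling (L : labeling) : bool := order_ideal (zeroset L).

Definition active (L : labeling) (x : P) : bool :=
  ((x \in zeroset L) && [forall y, (y \in zeroset L) ==> ~~ (x < y)%O])
  || ((x \notin zeroset L) && [forall y, (y \notin zeroset L) ==> ~~ (y < x)%O]).

Definition toggle (p : P) (L : labeling) : labeling :=
  if active L p then [ffun x => if x == p then theta (L p) else L x] else L.

Definition qrowmotion (ext : seq P) : labeling -> labeling :=
  foldr (fun p g => toggle p \o g) id ext.
End Labelings.

Definition mesic (R : realType) (T : finType) (D : pred T) (rho : T -> T)
    (g : T -> R) (c : R) : Prop :=
  forall x, D x ->
    (\sum_(y <- fingraph.orbit rho x) g y) / (size (fingraph.orbit rho x))%:R = c.

(* Main.v *)
Require Import Defs.
From HB Require Import structures.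
From mathcomp Require Import all_boot all_order all_algebra all_fingroup.
From mathcomp Require Import fraction reals.
From mathcomp Require Import ring.
Unset Printing Implicit Defensive.
Import Order.TTheory GRing.Theory Num.Theory.

Section Counting.
Variables (s r : nat) (theta : {perm Lab s r}).

Lemma sum_shift n (g : nat -> nat) : g n = g 0 ->
  \sum_(i < n) g i.+1 = \sum_(i < n) g i.
Proof.
case: n => [|n] h; first by rewrite !big_ord0.
rewrite big_ord_recr big_ord_recl /= h addnC; congr (_ + _).
 
Qed.

Lemma count_cycle n (l : nat -> Lab s r) (e : nat -> bool) :
  full_cycle theta ->
  (forall i, l i.+1 = if e i then theta (l i) else l i) -> l n = l 0 ->
  (s * \sum_(i < n) (e i && ~~ inF0 (l i)) = r * \sum_(i < n) (e i && inF0 (l i.+1)))%N.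
Proof.
move=> fc hl ln.
pose N z := (\sum_(i < n) (e i && (l i == z)))%N.
have Neq w : N w = (\sum_(i < n) (e i && (theta (l i) == w)))%N.
  have := @sum_shift n (fun i => ((l i == w) : nat)); rewrite /= ln => /(_ erefl).
  have -> : (\sum_(i < n) ((l i.+1 == w) : nat) =
      \sum_(i < n) ((e i && (theta (l i) == w)) + (~~ e i && (l i == w))))%N.
    by apply: eq_bigr => i _; rewrite hl; case: (e i); rewrite /= ?addn0 ?add0n.
  have -> : (\sum_(i < n) ((l i == w) : nat) =
      \sum_(i < n) ((e i && (l i == w)) + (~~ e i && (l i == w))))%N.
    by apply: eq_bigr => i _; case: (e i); rewrite /= ?addn0 ?add0n.
  by rewrite !big_split /= => /eqP; rewrite eqn_add2r => /eqP ->.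
have Nth z : N (theta z) = N z.
  by rewrite Neq; apply: eq_bigr => i _; rewrite (inj_eq perm_inj).
have Nc z : N z = N (l 0).
  have : z \in porbit theta (l 0) by rewrite fc inE.
  rewrite porbit_traject => /trajectP [i _ ->].
  by elim: i => [//|i IH]; rewrite iterS Nth.
have helper (g : Lab s r -> nat) :
    (\sum_(i < n) (e i * g (l i)) = \sum_(z : Lab s r) g z * N z)%N.
  rewrite /N; under [RHS]eq_bigr do rewrite big_distrr /=.
  rewrite exchange_big /=; apply: eq_bigr => i _.
  rewrite (bigD1 (l i)) //= big1 ?addn0 => [|z /negbTE].
    by rewrite eqxx andbT mulnC.
  by rewrite eq_sym => ->; rewrite andbF muln0.
have -> : (\sum_(i < n) (e i && ~~ inF0 (l i)) = \sum_(i < n) (e i * ~~ inF0 (l i)))%N.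
  by apply: eq_bigr => i _; rewrite mulnb.
have -> : (\sum_(i < n) (e i && inF0 (l i.+1)) = \sum_(i < n) (e i * inF0 (theta (l i))))%N.
  by apply: eq_bigr => i _; rewrite hl mulnb; case: (e i).
rewrite (helper (fun z => (~~ inF0 z : nat))) (helper (fun z => (inF0 (theta z) : nat))).
under eq_bigr do rewrite Nc.
under [X in (_ = r * X)%N]eq_bigr do rewrite Nc.
rewrite -!big_distrl /=.
rewrite [X in (_ = r * (X * _))%N](reindex_perm theta^-1) /=.
under [X in (_ = r * (X * _))%N]eq_bigr do rewrite permKV.
rewrite /Lab !big_sumType /= !big1_eq !add0n !addn0 !sum1_card !card_ord.
by rewrite mulnCA.
Qed.
End Counting.

Section Toggles.
Variables (d : Order.disp_t) (P : finPOrderType d) (s r : nat).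
Variable theta : {perm Lab s r}.
Notation labeling := {ffun P -> Lab s r}.
Notation rs := (@rs_labeling d P s r).
Notation qrow := (@qrowmotion d P s r theta).

Lemma idealP (I : {set P}) :
  reflect (forall x y, x \in I -> (y <= x)%O -> y \in I) (order_ideal I).
Proof.
apply: (iffP forallP) => [H x y xI yx | H x].
  by move: (H x) => /forallP /(_ y); rewrite xI yx.
by apply/forallP => y; apply/implyP => /andP [xI yx]; exact: H xI yx.
Qed.

Lemma in_zs (L : labeling) x : (x \in zeroset L) = inF0 (L x).
Proof. by rewrite inE. Qed.

Lemma activeE (L : labeling) x : active L x =
  if x \in zeroset L then [forall y, (y \in zeroset L) ==> ~~ (x < y)%O]
  else [forall y, (y \notin zeroset L) ==> ~~ (y < x)%O].
Proof. by rewrite /active /zeroset; case: (x \in [set p | inF0 (L p)]) => //=; rewrite orbF. Qed.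

Lemma toggle_other p (L : labeling) y : y != p -> toggle theta p L y = L y.
Proof. by move=> /negbTE yp; rewrite /toggle; case: ifP => // _; rewrite ffunE yp. Qed.

Lemma toggle_self p (L : labeling) :
  toggle theta p L p = if active L p then theta (L p) else L p.
Proof. by rewrite /toggle; case: ifP => // _; rewrite ffunE eqxx. Qed.

Lemma zs_toggle_other p (L : labeling) y : y != p ->
  (y \in zeroset (toggle theta p L)) = (y \in zeroset L).
Proof. by move=> yp; rewrite !in_zs toggle_other. Qed.

Lemma toggle_rs p (L : labeling) : rs_labeling L -> rs_labeling (toggle theta p L).
Proof.
move=> /idealP idl; apply/idealP => x y.
case act: (active L p); last by rewrite /toggle act; exact: idl.
have [->|yp] := eqVneq y p.
  have [->//|xp] := eqVneq x p.
  rewrite (zs_toggle_other p L x xp) => xI px.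
  have pI := idl _ _ xI px.
  move: act; rewrite activeE pI => /forallP /(_ x); rewrite xI /=.
  have ltpx : (p < x)%O by rewrite lt_neqAle px andbT eq_sym.
  by rewrite ltpx.
rewrite (zs_toggle_other p L y yp).
have [->|xp] := eqVneq x p; last by rewrite (zs_toggle_other p L x xp); exact: idl.
move=> _ yle; have ylt : (y < p)%O by rewrite lt_neqAle yp yle.
move: act; rewrite activeE; case: ifP => pI.
  by move=> _; exact: idl pI yle.
by move=> /forallP /(_ y); rewrite ylt implybF negbK.
Qed.

Lemma active_toggle p (L : labeling) : rs_labeling L ->
  active (toggle theta p L) p = active L p.
Proof.
move=> /idealP idl; case act: (active L p); last by rewrite /toggle act.
have ne : forall y, (p < y)%O \/ (y < p)%O -> y != p.
  by move=> y [] h; apply/eqP => e; move: h; rewrite e ltxx.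
rewrite activeE; case: ifP => pI'.
  apply/forallP => y; apply/implyP => yI; apply/negP => py.
  move: yI; rewrite zs_toggle_other; last by apply: ne; left.
  move=> yI; move: act; rewrite activeE; case: ifP => pI.
    by move=> /forallP /(_ y); rewrite yI py.
  by move: (idl _ _ yI (ltW py)); rewrite pI.
apply/forallP => y; apply/implyP => yI; apply/negP => yp.
move: yI; rewrite zs_toggle_other; last by apply: ne; right.
move=> yI; move: act; rewrite activeE; case: ifP => pI.
  by move: yI; rewrite (idl _ _ pI (ltW yp)).
by move=> /forallP /(_ y); rewrite yI yp.
Qed.

Lemma toggle_inj p : {in [pred L | rs L] &, injective (toggle theta p)}.
Proof.
move=> L1 L2 r1 r2 e.
have a12 : active L1 p = active L2 p.
  by rewrite -(active_toggle p L1 r1) -(active_toggle p L2 r2) e.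
apply/ffunP => y; have [->|yp] := eqVneq y p.
  move: (congr1 (fun L : labeling => L p) e); rewrite !toggle_self a12.
  by case: (active L2 p) => // /perm_inj.
by rewrite -(toggle_other p L1 y yp) -(toggle_other p L2 y yp) e.
Qed.


Lemma qrow_cons p s0 L : qrow (p :: s0) L = toggle theta p (qrow s0 L).
Proof. by []. Qed.

Lemma qrow_cat s1 s2 L :
  qrow (s1 ++ s2) L = qrow s1 (qrow s2 L).
Proof. by elim: s1 => //= p s1 IH; rewrite /= -!/(qrow _) -IH. Qed.

Lemma qrow_rs s0 L : rs L -> rs (qrow s0 L).
Proof. by elim: s0 => //= p s0 IH /IH; exact: toggle_rs. Qed.

Lemma qrow_inj s0 : {in [pred L | rs L] &, injective (qrow s0)}.
Proof.
elim: s0 => //= p s0 IH L1 L2 r1 r2 /= e.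
apply: IH => //; apply: (toggle_inj p) => //; rewrite inE; exact: qrow_rs.
Qed.

Lemma qrow_notin s0 L y : y \notin s0 -> qrow s0 L y = L y.
Proof.
elim: s0 => //= p s0 IH; rewrite inE negb_or => /andP [yp ys].
by rewrite -/(qrow s0 L) toggle_other // IH.
Qed.

Lemma step pre post p L : rs L -> uniq (pre ++ p :: post) ->
  (forall y, (y < p)%O -> y \notin post) -> (forall y, (p < y)%O -> y \notin pre) ->
  let M := qrow post L in
  let L' := qrow (pre ++ p :: post) L in
  [/\ L' p = (if active M p then theta (L p) else L p),
      ~~ inF0 (L p) -> active M p = Tplus p (zeroset L) &
      inF0 (L' p) -> active M p = Tminus p (zeroset L')].
Proof.
move=> rsL u hlo hhi M L'.
move: u; rewrite cat_uniq /= negb_or => /and3P [_ /andP [ppre _] /andP [ppost _]].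
have eL' : L' = qrow pre (toggle theta p M) by rewrite /L' qrow_cat.
have Mp : M p = L p by apply: qrow_notin.
have Mlo y : (y < p)%O -> M y = L y by move=> /hlo h; apply: qrow_notin.
have Lhi y : (p < y)%O -> L' y = M y.
  move=> py; rewrite eL' qrow_notin; last exact: hhi.
  by rewrite toggle_other // ; apply/eqP => e; move: py; rewrite e ltxx.
have L'p : L' p = toggle theta p M p by rewrite eL' qrow_notin.
have rsM : rs M by apply: qrow_rs.
split.
- by rewrite L'p toggle_self Mp.
- move=> hp; rewrite activeE in_zs Mp (negbTE hp) /Tplus inE in_zs hp /=.
  apply: eq_forallb => y; case yp: (y < p)%O; last by rewrite !implybT.
  by rewrite !inE Mlo.
- move=> hp; case h: (inF0 (L p)).
    rewrite activeE in_zs Mp h /Tminus in_zs hp /=.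
    apply: eq_forallb => y; case py: (p < y)%O; last by rewrite !implybT.
    by rewrite !in_zs Lhi.
  have act : active M p.
    by apply/negPn/negP => na; move: hp; rewrite L'p toggle_self (negbTE na) Mp h.
  rewrite act /Tminus in_zs hp /=; apply/esym/forallP => y; apply/implyP => yI.
  apply/negP => py; move: yI; rewrite in_zs Lhi // -in_zs => yI.
  move: rsM => /idealP /(_ _ _ yI (ltW py)); by rewrite in_zs Mp h.
Qed.

Lemma orbit_count ext L (p : P) : full_cycle theta -> linear_extension ext -> rs L ->
  (s * \sum_(i < fingraph.order (qrow ext) L) Tplus p (zeroset (iter i (qrow ext) L)) =
   r * \sum_(i < fingraph.order (qrow ext) L) Tminus p (zeroset (iter i (qrow ext) L)))%N.
Proof.
move=> fc [u allin lin] rsL.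
have pin := allin p.
case/splitPr: pin u lin => pre post u lin.
move: (u); rewrite cat_uniq /= negb_or => /and3P [_ /andP [ppre hp] /andP [ppost _]].
have ip : index p (pre ++ p :: post) = size pre by rewrite index_cat (negbTE ppre) /= eqxx addn0.
have hlo y : (y < p)%O -> y \notin post.
  move=> /lin; rewrite ip index_cat; case: ifP => [ypre _|]; last by rewrite ltnNge leq_addr.
  apply/negP => ypost; move/hasPn: hp => /(_ y ypost).
  by rewrite ypre.
have hhi y : (p < y)%O -> y \notin pre.
  move=> /lin; rewrite ip index_cat; case: ifP => // ypre.
  by rewrite ltnNge ltnW // index_mem.
set rho := qrow (pre ++ p :: post).
set n := fingraph.order rho L.
have rsI i : rs (iter i rho L) by elim: i => //= i IH; apply: qrow_rs.
have itn : iter n rho L = L.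
  apply: (@iter_order_in _ rho [pred L | rs L]) => //.
  - by move=> L0; rewrite !inE; apply: qrow_rs.
  - exact: qrow_inj.
pose l i := iter i rho L p.
pose e i := active (qrow post (iter i rho L)) p.
have st i := step pre post p (iter i rho L) (rsI i) u hlo hhi.
have hl i : l i.+1 = if e i then theta (l i) else l i.
  by have [h _ _] := st i; rewrite /l iterS h.
have := count_cycle s r theta n l e fc hl.
rewrite /l itn /= => /(_ erefl) H.
have -> : (\sum_(i < n) Tplus p (zeroset (iter i rho L)) =
   \sum_(i < n) (e i && ~~ inF0 (l i)))%N.
  apply: eq_bigr => i _; have [_ h _] := st i.
  case hi: (inF0 (l i)); last by rewrite /e /= h ?hi // andbT.
  by rewrite andbF /Tplus inE in_zs hi.
have -> : (\sum_(i < n) Tminus p (zeroset (iter i rho L)) =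
   \sum_(i < n) (e i && inF0 (l i.+1)))%N.
  rewrite -(@sum_shift n (fun i => (Tminus p (zeroset (iter i rho L)) : nat))) /=; last by rewrite itn.
  apply: eq_bigr => i _; have [_ _ h] := st i.
  case hi: (inF0 (l i.+1)).
    by rewrite andbT /e /= h //; move: hi; rewrite /l iterS.
  by rewrite andbF /Tminus in_zs -/(l i.+1) hi.
exact: H.
Qed.

End Toggles.


Local Open Scope ring_scope.

Section Ideals.
Variables (d : Order.disp_t) (P : finPOrderType d).

Lemma idealP' (I : {set P}) :
  reflect (forall x y, x \in I -> (y <= x)%O -> y \in I) (order_ideal I).
Proof.
apply: (iffP forallP) => [H x y xI yx | H x].
  by move: (H x) => /forallP /(_ y); rewrite xI yx.
by apply/forallP => y; apply/implyP => /andP [xI yx]; exact: H xI yx.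
Qed.

Lemma ideal_add (p : P) (I : {set P}) : p \notin I ->
  order_ideal (p |: I) && Tminus p (p |: I) = order_ideal I && Tplus p I.
Proof.
move=> pI; apply/idP/idP.
  move=> /andP [/idealP' hid /andP [_ /forallP hmax]].
  apply/andP; split.
    apply/idealP' => x y xI yx.
    have := hid x y; rewrite !inE xI orbT => /(_ isT yx) /orP [/eqP yp|//].
    subst y.
    have px : (p < x)%O.
      rewrite lt_neqAle yx andbT; apply/eqP => e.
      by move: pI; rewrite e xI.
    by move: (hmax x); rewrite !inE xI orbT px.
  rewrite /Tplus inE pI /=; apply/forallP => y; apply/implyP; rewrite inE => yI.
  apply/negP => yp; have := hid p y; rewrite !inE eqxx => /(_ isT (ltW yp)).
  case/orP => [/eqP e|]; last by rewrite (negbTE yI).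
  by move: yp; rewrite e ltxx.
move=> /andP [/idealP' hid /andP [_ /forallP hmin]].
apply/andP; split.
  apply/idealP' => x y /setU1P [->|xI] yx; last by apply/setU1r; exact: hid x y xI yx.
  have [->|yp] := eqVneq y p; first exact: setU11.
  have ylt : (y < p)%O by rewrite lt_neqAle yp yx.
  apply/setU1r; move: (hmin y); rewrite inE ylt implybF negbK; done.
rewrite /Tminus setU11 /=; apply/forallP => y; apply/implyP.
move=> /setU1P [->|yI]; first by rewrite ltxx.
apply/negP => py; by move: pI; rewrite (hid y p yI (ltW py)).
Qed.

Lemma bij_sum (R : nmodType) (p : P) (Q : pred {set P}) (F : {set P} -> R) :
  (forall I : {set P}, p \notin I -> Q (p |: I) = Q I) ->
  \sum_(I | order_ideal I && Q I && Tminus p I) F I =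
  \sum_(I | order_ideal I && Q I && Tplus p I) F (p |: I).
Proof.
move=> hQ.
pose t (I : {set P}) := if p \in I then I :\ p else p |: I.
have tK : involutive t.
  move=> I; rewrite /t; case pI: (p \in I).
    by rewrite setD11 setD1K.
  by rewrite setU11 setU1K ?pI.
rewrite (reindex_inj (inv_inj tK)) /=.
apply: eq_big => I.
  rewrite /t; case: ifP => pI.
    rewrite /Tminus /Tplus !inE eqxx pI /=.
    by rewrite !andbF.
  rewrite hQ ?pI //; case: (Q I); rewrite ?andbF ?andbT // ideal_add ?pI // .
move=> H; rewrite /t; case pI: (p \in I) => //; move: H; rewrite /t pI /Tminus setD11 !andbF. by [].
Qed.

End Ideals.

Section Alg.
Variables (R : realType) (d : Order.disp_t) (P : finPOrderType d).
Notation RQ := {fraction {poly R}}.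

Definition wt (I : {set P}) : {poly R} := 'X^#|~: I|.
Definition Tpoly (p : P) (I : {set P}) : {poly R} :=
  (Tplus p I)%:R - 'X * (Tminus p I)%:R.

Lemma Tq_frac (p : P) (I : {set P}) : Tq R p I = (Tpoly p I)%:F.
Proof. by rewrite /Tq /Tpoly rmorphB rmorphM !rmorph_nat. Qed.

Lemma sum_ind (A : pred {set P}) (b : {set P} -> bool) (g : {set P} -> {poly R}) :
  \sum_(I | A I) g I * (b I)%:R = \sum_(I | A I && b I) g I.
Proof.
by rewrite big_mkcondr /=; apply: eq_bigr => I _; case: (b I); rewrite ?mulr1 ?mulr0.
Qed.

Lemma wt_add (p : P) (I : {set P}) : p \notin I -> wt (p |: I) * 'X = wt I.
Proof.
move=> pI; rewrite /wt -exprSr; congr (_ ^+ _).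
rewrite (cardsD1 p (~: I)) inE pI add1n; congr (_.+1); apply: eq_card => y.
by rewrite !inE negb_or andbC.
Qed.

Lemma GL (p : P) (Q : pred {set P}) :
  (forall I : {set P}, p \notin I -> Q (p |: I) = Q I) ->
  \sum_(I | order_ideal I && Q I) wt I * Tpoly p I = 0.
Proof.
move=> hQ; rewrite /Tpoly.
under eq_bigr do rewrite mulrBr mulrA.
rewrite sumrB !sum_ind bij_sum //.
rewrite [X in _ - X](eq_bigr (fun I => wt I)); first by rewrite subrr.
by move=> I /andP [_ /andP [pI _]]; rewrite inE in pI; rewrite wt_add.
Qed.

End Alg.

Section Main.
Variables (R : realType) (d : Order.disp_t) (P : finPOrderType d).
Variables (f : {set P} -> R) (c : {fraction {poly R}}) (cp : P -> {fraction {poly R}}).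
Notation wt := (@wt R d P).
Notation Tpoly := (@Tpoly R d P).

Lemma key (hc : forall I, order_ideal I -> ((f I)%:P)%:F - c = \sum_(p : P) cp p * Tq R p I)
  (A : pred {set P}) : (forall I, A I -> order_ideal I) ->
  (\sum_(I | A I) (f I)%:P * wt I)%:F - c * (\sum_(I | A I) wt I)%:F =
  \sum_(p : P) cp p * (\sum_(I | A I) wt I * Tpoly p I)%:F.
Proof.
move=> hA; rewrite !rmorph_sum mulr_sumr -sumrB.
transitivity (\sum_(I | A I) (wt I)%:F * (((f I)%:P)%:F - c)).
  by apply: eq_bigr => I _; rewrite rmorphM; ring.
rewrite (eq_bigr (fun I => \sum_(p : P) (wt I)%:F * (cp p * Tq R p I))); last first.
  by move=> I hI; rewrite hc ?hA // mulr_sumr.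
rewrite exchange_big; apply: eq_bigr => p _; rewrite rmorph_sum mulr_sumr.
by apply: eq_bigr => I _; rewrite Tq_frac rmorphM; ring.
Qed.

Definition Apol (p : P) := \sum_(I | order_ideal I && Tplus p I) wt I.
Definition Bpol (p : P) := \sum_(I | order_ideal I && (p \notin I)) (f I)%:P * wt I.
Definition Zpol (p : P) := \sum_(I | order_ideal I && (p \notin I)) wt I.
Definition Wpol := \sum_(I | order_ideal I && predT I) wt I.
Definition Npol := \sum_(I | order_ideal I && predT I) (f I)%:P * wt I.

Lemma M1 (hc : forall I, order_ideal I -> ((f I)%:P)%:F - c = \sum_(p : P) cp p * Tq R p I) :
  c * Wpol%:F = Npol%:F.
Proof.
apply/eqP; rewrite eq_sym -subr_eq0; apply/eqP.
rewrite (key hc (fun I => order_ideal I && predT I)); last by move=> I /andP [].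
by rewrite big1 // => p _; rewrite GL // rmorph0 mulr0.
Qed.

Lemma M2 (hc : forall I, order_ideal I -> ((f I)%:P)%:F - c = \sum_(p : P) cp p * Tq R p I)
  (p0 : P) : (Bpol p0)%:F - c * (Zpol p0)%:F = cp p0 * (Apol p0)%:F.
Proof.
rewrite (key hc (fun I => order_ideal I && (p0 \notin I))); last by move=> I /andP [].
rewrite (bigD1 p0) //= [X in _ + X]big1 ?addr0.
  congr (_ * _%:F); rewrite /Apol /Tpoly.
  rewrite (eq_bigr (fun I => wt I * (Tplus p0 I)%:R)); last first.
    by move=> I /andP [_ pI]; rewrite /Tminus (negbTE pI) mulr0 subr0.
  rewrite sum_ind; apply: eq_bigl => I; rewrite -andbA; congr (_ && _).
  by rewrite /Tplus inE; case: (p0 \in I).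
move=> p pp0; rewrite GL ?rmorph0 ?mulr0 // => I pI.
by rewrite !inE negb_or eq_sym pp0.
Qed.

Lemma posx (x : R) (A : pred {set P}) I0 : 0 < x -> A I0 ->
  0 < (\sum_(I | A I) wt I).[x].
Proof.
move=> x0 AI0; rewrite horner_sum (bigD1 I0) //= /wt hornerXn.
apply: ltr_wpDr; last exact: exprn_gt0.
by apply: sumr_ge0 => I _; rewrite hornerXn exprn_ge0 // ltW.
Qed.

Lemma Apos (x : R) (p : P) : 0 < x -> 0 < (Apol p).[x].
Proof.
move=> x0; apply: (@posx x _ [set y | (y < p)%O]) => //.
apply/andP; split.
  apply/idealP' => a b; rewrite !inE => ap ba; exact: le_lt_trans ba ap.
rewrite /Tplus !inE ltxx /=; apply/forallP => y; apply/implyP.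
by rewrite !inE.
Qed.

Lemma Wpos (x : R) : 0 < x -> 0 < Wpol.[x].
Proof.
move=> x0; apply: (@posx x _ setT) => //=; rewrite andbT.
by apply/idealP' => a b; rewrite !inE.
Qed.

End Main.

Theorem proposition5p7 (R : realType) (d : Order.disp_t) (P : finPOrderType d)
    (f : {set P} -> R) (c : {fraction {poly R}}) :
  qequiv (fun I => ((f I)%:P)%:F) c ->
  forall (r s : nat), (0 < r)%N -> (0 < s)%N ->
  forall theta : {perm Lab s r}, full_cycle theta ->
  forall ext : seq P, linear_extension ext ->
  exists v : R,
    frac_eval c (r%:R / s%:R) v /\
    mesic (@rs_labeling d P s r) (qrowmotion theta ext)
          (fun L => f (zeroset L)) v.
Proof.
move=> [cp hc] r s r0 s0 theta fc ext lin.
set x : R := r%:R / s%:R.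
have sn0 : (s%:R : R) != 0 by rewrite pnatr_eq0 -lt0n.
have x0 : 0 < x by rewrite divr_gt0 ?ltr0n.
have hM1 := M1 _ _ _ _ _ _ hc.
have Wx := Wpos _ _ P _ x0.
have Wn0 : (Wpol R d P)%:F != 0.
  rewrite tofrac_eq0; apply/eqP => W0; by move: Wx; rewrite W0 horner0 ltxx.
exists ((Npol R d P f).[x] / (Wpol R d P).[x]); split.
  exists (Npol R d P f), (Wpol R d P); split => //; first by rewrite gt_eqF.
  by rewrite -hM1 mulfK.
move=> L rsL.
set rho := qrowmotion theta ext.
set n := fingraph.order rho L.
have rsI i : rs_labeling (iter i rho L).
  by elim: i => //= i IH; apply: qrow_rs.
set F := \sum_(i < n) f (zeroset (iter i rho L)).
have Forb : \sum_(y <- fingraph.orbit rho L) f (zeroset y) = F.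
  rewrite (big_nth L) size_orbit big_mkord; apply: eq_bigr => i _.
  by rewrite /fingraph.orbit nth_traject.
rewrite /= Forb size_orbit -/n.
pose a p := (\sum_(i < n) Tplus p (zeroset (iter i rho L)))%N.
pose b p := (\sum_(i < n) Tminus p (zeroset (iter i rho L)))%N.
have hab p : (s * a p = r * b p)%N := orbit_count d P s r theta ext L p fc lin rsL.
have M3 : ((F%:P)%:F - n%:R * c = \sum_(p : P) cp p * ((a p)%:R - ('X)%:F * (b p)%:R)).
  transitivity (\sum_(i < n) (((f (zeroset (iter i rho L)))%:P)%:F - c)).
    rewrite sumrB /F !rmorph_sum sumr_const card_ord mulr_natl //.
  rewrite (eq_bigr (fun i : 'I_n => \sum_(p : P) cp p * Tq R p (zeroset (iter i rho L)))); last first.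
    by move=> i _; rewrite hc //; exact: rsI.
  rewrite exchange_big; apply: eq_bigr => p _; rewrite -mulr_sumr; congr (_ * _).
  by rewrite /Tq sumrB -mulr_sumr /a /b !natr_sum.
set W := Wpol R d P; set N0 := Npol R d P f.
pose A p := Apol R d P p; pose B p := Bpol R d P f p; pose Z p := Zpol R d P p.
have E : ((F%:P)%:F * W%:F - n%:R * N0%:F) * \prod_(p : P) (A p)%:F =
    \sum_(p : P) ((a p)%:R - ('X)%:F * (b p)%:R) *
       (((B p)%:F * W%:F - N0%:F * (Z p)%:F) * \prod_(p' | p' != p) (A p')%:F).
  rewrite -hM1.
  transitivity (((F%:P)%:F - n%:R * c) * (W%:F * \prod_(p : P) (A p)%:F)); first by ring.
  rewrite M3 mulr_suml; apply: eq_bigr => p _.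
  rewrite (bigD1 p) //=.
  have h2 := M2 _ _ _ _ _ _ hc p.
  have hB : (B p)%:F = cp p * (A p)%:F + c * (Z p)%:F by rewrite -h2 subrK.
  rewrite hB; ring.
have Ep : ((F%:P) * W - n%:R * N0) * \prod_(p : P) A p =
    \sum_(p : P) ((a p)%:R - 'X * (b p)%:R) *
       ((B p * W - N0 * Z p) * \prod_(p' | p' != p) A p').
  apply/eqP; rewrite -tofrac_eq; apply/eqP.
  rewrite rmorphM rmorphB !rmorphM rmorph_nat rmorph_prod E [RHS]rmorph_sum.
  apply: eq_bigr => p _.
  by rewrite !rmorphM !rmorphB !rmorphM !rmorph_nat rmorph_prod.
have := congr1 (fun q => q.[x]) Ep; rewrite /=.
rewrite horner_sum [X in _ = X]big1; last first.
  move=> p _; rewrite hornerM.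
  suff -> : ((a p)%:R - 'X * (b p)%:R : {poly R}).[x] = 0 by rewrite mul0r.
  rewrite -!polyC_natr !hornerE; apply: (mulfI sn0); rewrite mulr0 mulrBr.
  have -> : (s%:R * (a p)%:R = r%:R * (b p)%:R :> R) by rewrite -!natrM hab.
  by rewrite /x; field.
rewrite hornerM horner_prod -polyC_natr !hornerE => /eqP; rewrite mulf_eq0 => /orP [|h]; last first.
  have pp : 0 < \prod_(p : P) (A p).[x] by apply: prodr_gt0 => p _; exact: Apos.
  by move: pp; rewrite lt0r h.
rewrite subr_eq0 => /eqP h.
have nn0 : (n%:R : R) != 0 by rewrite pnatr_eq0 -lt0n fingraph.order_gt0.
by apply/eqP; rewrite (eqr_div _ _ nn0 (negbT (gt_eqF Wx))) h mulrC.
Qed.
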